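(* Let $x_j=\ell_j/p_j$. Then $\sum_{n=1}^{2P}n\,\chi_{2P}^{(\ell_1,\ell_2,\ell_3)}(n)\ne0$ if and only if \[ 1<x_1+x_2+x_3<3,\quad -1<x_1+x_2-x_3<1,\quad -1<x_1-x_2+x_3<1,\quad -1<-x_1+x_2+x_3<1, \] and in that case $\sum_{n=1}^{2P}n\,\chi_{2P}^{(\ell_1,\ell_2,\ell_3)}(n)=4P$.
   Context: $p_1,p_2,p_3$ pairwise coprime positive integers, $P=p_1p_2p_3$, integers $1\le\ell_j\le p_j-1$. The odd function $\chi_{2P}^{(\ell_1,\ell_2,\ell_3)}:\mathbb Z\to\{0,\pm1\}$, periodic mod $2P$, is defined by: $\chi(n)=1$ if $n\equiv P(1+\sum_j\varepsilon_j\ell_j/p_j)\pmod{2P}$ for some signs $\varepsilon_j\in\{\pm1\}$ with $\varepsilon_1\varepsilon_2\varepsilon_3=-1$; $\chi(n)=-1$ if this holds with $\varepsilon_1\varepsilon_2\varepsilon_3=1$; $\chi(n)=0$ otherwise. *)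

(* Defs.v *)
From HB Require Import structures.
From mathcomp Require Import all_boot all_order all_algebra.
Set Implicit Arguments. Unset Strict Implicit. Unset Printing Implicit Defensive.
Import Order.TTheory GRing.Theory Num.Theory.
Local Open Scope ring_scope.

Definition sgb (b : bool) : int := if b then 1 else -1.

(* The residue P (1 + e1 l1/p1 + e2 l2/p2 + e3 l3/p3), an integer since p_j | P. *)
Definition chi_res (p1 p2 p3 l1 l2 l3 : nat) (e1 e2 e3 : bool) : int :=
  let P := (p1 * p2 * p3)%N in
  P%:Z + sgb e1 * (l1 * (P %/ p1))%N%:Z + sgb e2 * (l2 * (P %/ p2))%N%:Z
       + sgb e3 * (l3 * (P %/ p3))%N%:Z.

Definition chi (p1 p2 p3 l1 l2 l3 : nat) (n : int) : int :=
  let P := (p1 * p2 * p3)%N in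
  let hit (s : int) := [exists e1 : bool, exists e2 : bool, exists e3 : bool,
      (sgb e1 * sgb e2 * sgb e3 == s) &&
      (n == chi_res p1 p2 p3 l1 l2 l3 e1 e2 e3 %[mod (2 * P)%N%:Z])%Z] in
  if hit (-1) then 1 else if hit 1 then -1 else 0.

(* Main.v *)
Require Import Defs.
From HB Require Import structures.
From mathcomp Require Import all_boot all_order all_algebra.
From mathcomp Require Import zify ring lra.
Import Order.TTheory GRing.Theory Num.Theory.
Local Open Scope ring_scope.

Definition kf (P s : int) : int := if s <= - P then 1 else if P < s then -1 else 0.
Definition sv (a1 a2 a3 : int) (e1 e2 e3 : bool) : int :=
  sgb e1 * a1 + sgb e2 * a2 + sgb e3 * a3.
Definition rep (P a1 a2 a3 : int) e1 e2 e3 : int :=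
  P + sv a1 a2 a3 e1 e2 e3 + 2 * P * kf P (sv a1 a2 a3 e1 e2 e3).

Lemma sgbE e : sgb e = 1 \/ sgb e = -1.
Proof. by case: e; [left|right]. Qed.

Lemma ND (a b c P d bb cc q : int) : b = d * bb -> c = d * cc -> P = d * q ->
  (forall y, a <> d * y) -> forall s1 s2 s3 K, (s1 = 1 \/ s1 = -1) ->
  s1 * a + s2 * b + s3 * c + K * P <> 0.
Proof.
move=> -> -> -> Ha s1 s2 s3 K [] -> H.
- apply: (Ha (- (s2 * bb + s3 * cc + K * q))). lia.
- apply: (Ha (s2 * bb + s3 * cc + K * q)). lia.
Qed.

Lemma sv_bound P a1 a2 a3 e1 e2 e3 : 0 < a1 < P -> 0 < a2 < P -> 0 < a3 < P ->
  - (3 * P) < sv a1 a2 a3 e1 e2 e3 < 3 * P.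
Proof.
rewrite /sv => H1 H2 H3.
case: (sgbE e1) => ->; case: (sgbE e2) => ->; case: (sgbE e3) => ->; lia.
Qed.

Lemma rep_bound P a1 a2 a3 e1 e2 e3 : 0 < a1 < P -> 0 < a2 < P -> 0 < a3 < P ->
  1 <= rep P a1 a2 a3 e1 e2 e3 <= 2 * P.
Proof.
move=> H1 H2 H3; have := @sv_bound _ _ _ _ e1 e2 e3 H1 H2 H3.
rewrite /rep /kf; set s := sv _ _ _ _ _ _.
case: ifP => ?; [|case: ifP => ?]; lia.
Qed.

Lemma rep_mod P a1 a2 a3 e1 e2 e3 (n : int) : 0 < a1 < P -> 0 < a2 < P -> 0 < a3 < P ->
  1 <= n <= 2 * P ->
  (n == P + sv a1 a2 a3 e1 e2 e3 %[mod 2 * P])%Z = (n == rep P a1 a2 a3 e1 e2 e3).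
Proof.
move=> H1 H2 H3 Hn; have := @rep_bound _ _ _ _ e1 e2 e3 H1 H2 H3.
rewrite eqz_mod_dvd /rep; set s := sv _ _ _ _ _ _; set k := kf _ _ => Hr.
apply/dvdzP/eqP.
- case=> q Hq. have Ht : n - (P + s + 2 * P * k) = (q - k) * (2 * P) by lia.
  move: Ht; set t := q - k => Ht.
  have : t = 0 by nia.
  lia.
- move=> ->; exists k; ring.
Qed.

Definition half (e f : bool) : int := if e == f then 0 else sgb e.

Lemma halfE e f : (half e f = 0 /\ e = f) \/ ((half e f = 1 \/ half e f = -1)).
Proof. by case: e; case: f; rewrite /half /sgb /=; auto. Qed.

Lemma sv_diff a1 a2 a3 e1 e2 e3 f1 f2 f3 :
  sv a1 a2 a3 e1 e2 e3 - sv a1 a2 a3 f1 f2 f3 =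
  2 * (half e1 f1 * a1 + half e2 f2 * a2 + half e3 f3 * a3).
Proof.
by case: e1; case: e2; case: e3; case: f1; case: f2; case: f3;
  rewrite /sv /half /sgb /=; ring.
Qed.

Lemma rep_inj (P a1 a2 a3 : int) :
  (forall s1 s2 s3 K, (s1 = 1 \/ s1 = -1) -> s1*a1 + s2*a2 + s3*a3 + K*P <> 0) ->
  (forall s1 s2 s3 K, (s2 = 1 \/ s2 = -1) -> s1*a1 + s2*a2 + s3*a3 + K*P <> 0) ->
  (forall s1 s2 s3 K, (s3 = 1 \/ s3 = -1) -> s1*a1 + s2*a2 + s3*a3 + K*P <> 0) ->
  forall e1 e2 e3 f1 f2 f3,
  rep P a1 a2 a3 e1 e2 e3 = rep P a1 a2 a3 f1 f2 f3 -> [/\ e1 = f1, e2 = f2 & e3 = f3].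
Proof.
move=> N1 N2 N3 e1 e2 e3 f1 f2 f3; rewrite /rep => Heq.
have E := sv_diff a1 a2 a3 e1 e2 e3 f1 f2 f3.
move: Heq E; set se := sv _ _ _ e1 e2 e3; set sf := sv _ _ _ f1 f2 f3.
set ke := kf P se; set kf' := kf P sf => Heq E.
have H0 : half e1 f1 * a1 + half e2 f2 * a2 + half e3 f3 * a3 + (ke - kf') * P = 0 by lia.
case: (halfE e1 f1) => [[_ ->]|h1]; last by case: (N1 _ _ _ _ h1 H0).
case: (halfE e2 f2) => [[_ ->]|h2]; last by case: (N2 _ _ _ _ h2 H0).
case: (halfE e3 f3) => [[_ ->]|h3]; last by case: (N3 _ _ _ _ h3 H0).
by [].
Qed.

Lemma rep_eqE P a1 a2 a3 :
  (forall s1 s2 s3 K, (s1 = 1 \/ s1 = -1) -> s1*a1 + s2*a2 + s3*a3 + K*P <> 0) ->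
  (forall s1 s2 s3 K, (s2 = 1 \/ s2 = -1) -> s1*a1 + s2*a2 + s3*a3 + K*P <> 0) ->
  (forall s1 s2 s3 K, (s3 = 1 \/ s3 = -1) -> s1*a1 + s2*a2 + s3*a3 + K*P <> 0) ->
  forall e1 e2 e3 f1 f2 f3,
  (rep P a1 a2 a3 e1 e2 e3 == rep P a1 a2 a3 f1 f2 f3) = [&& e1 == f1, e2 == f2 & e3 == f3].
Proof.
move=> N1 N2 N3 e1 e2 e3 f1 f2 f3.
apply/eqP/and3P => [/(@rep_inj P a1 a2 a3 N1 N2 N3) [-> -> ->]|[/eqP-> /eqP-> /eqP->]] //.
Qed.

Lemma existsb_bool (Q : pred bool) : [exists x, Q x] = Q true || Q false.
Proof.
apply/existsP/orP => [[[] H]|[H|H]]; [left|right|exists true|exists false] => //.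
Qed.

Lemma chi_eq (p1 p2 p3 l1 l2 l3 n : nat) :
  let P := (p1 * p2 * p3)%N%:Z in
  let a1 := (l1 * ((p1 * p2 * p3) %/ p1))%N%:Z in
  let a2 := (l2 * ((p1 * p2 * p3) %/ p2))%N%:Z in
  let a3 := (l3 * ((p1 * p2 * p3) %/ p3))%N%:Z in
  0 < a1 < P -> 0 < a2 < P -> 0 < a3 < P ->
  (forall s1 s2 s3 K, (s1 = 1 \/ s1 = -1) -> s1*a1 + s2*a2 + s3*a3 + K*P <> 0) ->
  (forall s1 s2 s3 K, (s2 = 1 \/ s2 = -1) -> s1*a1 + s2*a2 + s3*a3 + K*P <> 0) ->
  (forall s1 s2 s3 K, (s3 = 1 \/ s3 = -1) -> s1*a1 + s2*a2 + s3*a3 + K*P <> 0) ->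
  (1 <= n <= 2 * (p1 * p2 * p3))%N ->
  chi p1 p2 p3 l1 l2 l3 n%:Z =
  \sum_(e1 : bool) \sum_(e2 : bool) \sum_(e3 : bool)
     (if n%:Z == rep P a1 a2 a3 e1 e2 e3 then - (sgb e1 * sgb e2 * sgb e3) else 0).
Proof.
move=> P a1 a2 a3 H1 H2 H3 N1 N2 N3 Hn.
have hmod : forall e1 e2 e3,
  (n%:Z == chi_res p1 p2 p3 l1 l2 l3 e1 e2 e3 %[mod (2 * (p1 * p2 * p3))%N%:Z])%Z =
  (n%:Z == rep P a1 a2 a3 e1 e2 e3).
  move=> e1 e2 e3.
  have -> : chi_res p1 p2 p3 l1 l2 l3 e1 e2 e3 = P + sv a1 a2 a3 e1 e2 e3.
    by rewrite /chi_res /sv /P /a1 /a2 /a3; ring.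
  rewrite PoszM; apply: rep_mod => //.
rewrite /chi !existsb_bool /= !hmod !big_bool /=.
have [[[e1 e2] e3] /= /eqP -> | Hno] :=
  pickP (fun e : bool * bool * bool => n%:Z == rep P a1 a2 a3 e.1.1 e.1.2 e.2).
  rewrite !(@rep_eqE P a1 a2 a3 N1 N2 N3).
  by case: e1; case: e2; case: e3; rewrite /=; lia.
have H' e1 e2 e3 : (n%:Z == rep P a1 a2 a3 e1 e2 e3) = false := Hno (e1, e2, e3).
by rewrite !H' /=; lia.
Qed.

Lemma sum_ind (M : nat) (r c : int) : 1 <= r <= M%:Z ->
  \sum_(1 <= n < M.+1) n%:Z * (if n%:Z == r then c else 0) = c * r.
Proof.
case: r => [m|m] Hm; last by [].
have Hm' : (1 <= m <= M)%N by move: Hm; rewrite !lez_nat.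
rewrite (@bigD1_seq _ _ _ _ _ m); last exact: iota_uniq; last by rewrite mem_index_iota ltnS.
rewrite eqxx big1 => [|i /negbTE Hi]; last by rewrite eqz_nat Hi mulr0.
by rewrite Monoid.mulm1 mulrC.
Qed.

Lemma kfN P u : 0 < P -> u <> P -> u <> - P -> kf P (- u) = - kf P u.
Proof. move=> *; rewrite /kf; do 4 (try case: ifP => ?); lia. Qed.

Lemma FIN (P a1 a2 a3 : int) : 0 < a1 < P -> 0 < a2 < P -> 0 < a3 < P ->
  (forall s1 s2 s3 K, (s1 = 1 \/ s1 = -1) -> s1*a1 + s2*a2 + s3*a3 + K*P <> 0) ->
  let k := kf P (sv a1 a2 a3 true true true) + kf P (sv a1 a2 a3 true false false)
         + kf P (sv a1 a2 a3 false true false) + kf P (sv a1 a2 a3 false false true) in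
  let condZ := (P < a1 + a2 + a3) /\ (a1 + a2 + a3 < 3 * P) /\
     (- P < a1 + a2 - a3) /\ (a1 + a2 - a3 < P) /\
     (- P < a1 - a2 + a3) /\ (a1 - a2 + a3 < P) /\
     (- P < - a1 + a2 + a3) /\ (- a1 + a2 + a3 < P) in
  (k = -1 /\ condZ) \/ (k = 0 /\ ~ condZ).
Proof.
move=> H1 H2 H3 N1 k condZ.
have F1 := N1 1 1 1 (-1) (or_introl erefl).
have F2 := N1 1 1 1 1 (or_introl erefl).
have F3 := N1 1 (-1) (-1) (-1) (or_introl erefl).
have F4 := N1 1 (-1) (-1) 1 (or_introl erefl).
have F5 := N1 (-1) 1 (-1) (-1) (or_intror erefl).
have F6 := N1 (-1) 1 (-1) 1 (or_intror erefl).
have F7 := N1 (-1) (-1) 1 (-1) (or_intror erefl).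
have F8 := N1 (-1) (-1) 1 1 (or_intror erefl).
rewrite /k /condZ /sv /sgb /kf.
do 8 (try case: ifP => ?); lia.
Qed.

Lemma xsum (p1 p2 p3 l1 l2 l3 : nat) (s1 s2 s3 : int) :
  (0 < p1)%N -> (0 < p2)%N -> (0 < p3)%N ->
  s1%:~R * ((l1%:R : rat) / p1%:R) + s2%:~R * (l2%:R / p2%:R) + s3%:~R * (l3%:R / p3%:R) =
  (s1 * (l1 * (p2 * p3))%N%:Z + s2 * (l2 * (p1 * p3))%N%:Z + s3 * (l3 * (p1 * p2))%N%:Z)%:~R
    / ((p1 * p2 * p3)%N%:Z)%:~R.
Proof.
move=> h1 h2 h3.
rewrite !PoszM !intrD !intrM -!pmulrn.
have n1 : (p1%:R : rat) != 0 by rewrite pnatr_eq0 -lt0n.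
have n2 : (p2%:R : rat) != 0 by rewrite pnatr_eq0 -lt0n.
have n3 : (p3%:R : rat) != 0 by rewrite pnatr_eq0 -lt0n.
by field; rewrite n1 n2 n3.
Qed.

Lemma lt_div_l (r : rat) (c A Q : int) : c%:~R = r -> 0 < Q ->
  (r < A%:~R / Q%:~R) = (c * Q < A).
Proof. by move=> <- hQ; rewrite ltr_pdivlMr ?ltr0z // -intrM ltr_int. Qed.

Lemma lt_div_r (r : rat) (c A Q : int) : c%:~R = r -> 0 < Q ->
  (A%:~R / Q%:~R < r) = (A < c * Q).
Proof. by move=> <- hQ; rewrite ltr_pdivrMr ?ltr0z // -intrM ltr_int. Qed.

Lemma kfsvN (P a1 a2 a3 : int) : 0 < P ->
  (forall s1 s2 s3 K, (s1 = 1 \/ s1 = -1) -> s1*a1 + s2*a2 + s3*a3 + K*P <> 0) ->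
  forall e1 e2 e3,
  kf P (sv a1 a2 a3 (~~ e1) (~~ e2) (~~ e3)) = - kf P (sv a1 a2 a3 e1 e2 e3).
Proof.
move=> hP N1 e1 e2 e3.
have -> : sv a1 a2 a3 (~~ e1) (~~ e2) (~~ e3) = - sv a1 a2 a3 e1 e2 e3.
  by case: e1; case: e2; case: e3; rewrite /sv /sgb /=; ring.
apply: kfN => //; rewrite /sv => H.
- by apply: (N1 (sgb e1) (sgb e2) (sgb e3) (-1) (sgbE e1)); lia.
- by apply: (N1 (sgb e1) (sgb e2) (sgb e3) 1 (sgbE e1)); lia.
Qed.

Lemma nondiv (p l m : nat) : (0 < l < p)%N -> coprime p m ->
  forall y : int, (l * m)%N%:Z <> p%:Z * y.
Proof.
move=> hl hc y H.
have : (p%:Z %| (l * m)%N%:Z)%Z by apply/dvdzP; exists y; rewrite H mulrC.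
rewrite dvdzE /= Gauss_dvdl // => /dvdn_leq.
lia.
Qed.

Theorem mainTheorem3 (p1 p2 p3 l1 l2 l3 : nat) :
  (0 < p1)%N -> (0 < p2)%N -> (0 < p3)%N ->
  coprime p1 p2 -> coprime p1 p3 -> coprime p2 p3 ->
  (0 < l1 < p1)%N -> (0 < l2 < p2)%N -> (0 < l3 < p3)%N ->
  let P := (p1 * p2 * p3)%N in
  let x1 : rat := l1%:R / p1%:R in
  let x2 : rat := l2%:R / p2%:R in
  let x3 : rat := l3%:R / p3%:R in
  let S : int := \sum_(1 <= n < (2 * P).+1) (n%:Z * chi p1 p2 p3 l1 l2 l3 n%:Z) in
  let cond := [/\ 1 < x1 + x2 + x3 < 3, -1 < x1 + x2 - x3 < 1,
                  -1 < x1 - x2 + x3 < 1 & -1 < - x1 + x2 + x3 < 1] in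
  (S != 0 <-> cond) /\ (cond -> S = (4 * P)%N%:Z).
Proof.
move=> hp1 hp2 hp3 c12 c13 c23 hl1 hl2 hl3; cbv zeta.
case/andP: hl1 => l1a l1b; case/andP: hl2 => l2a l2b; case/andP: hl3 => l3a l3b.
have d1 : ((p1 * p2 * p3) %/ p1)%N = (p2 * p3)%N by rewrite -mulnA mulKn.
have d2 : ((p1 * p2 * p3) %/ p2)%N = (p1 * p3)%N by rewrite [(p1 * p2)%N]mulnC -mulnA mulKn.
have d3 : ((p1 * p2 * p3) %/ p3)%N = (p1 * p2)%N by rewrite mulnK.
pose PZ := (p1 * p2 * p3)%N%:Z.
pose a1 := (l1 * ((p1 * p2 * p3) %/ p1))%N%:Z.
pose a2 := (l2 * ((p1 * p2 * p3) %/ p2))%N%:Z.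
pose a3 := (l3 * ((p1 * p2 * p3) %/ p3))%N%:Z.
have hPZ : 0 < PZ by rewrite /PZ; nia.
have B1 : 0 < a1 < PZ by rewrite /a1 /PZ d1; apply/andP; split; nia.
have B2 : 0 < a2 < PZ by rewrite /a2 /PZ d2; apply/andP; split; nia.
have B3 : 0 < a3 < PZ by rewrite /a3 /PZ d3; apply/andP; split; nia.
have ND1 : forall y, a1 <> p1%:Z * y.
  by rewrite /a1 d1; apply: nondiv; [rewrite l1a l1b | rewrite coprimeMr c12 c13].
have ND2 : forall y, a2 <> p2%:Z * y.
  by rewrite /a2 d2; apply: nondiv; [rewrite l2a l2b | rewrite coprimeMr coprime_sym c12 c23].
have ND3 : forall y, a3 <> p3%:Z * y.
  by rewrite /a3 d3; apply: nondiv; [rewrite l3a l3b | rewrite coprimeMr !(coprime_sym p3) c13 c23].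
have N1 := ND a1 a2 a3 PZ p1%:Z (l2 * p3)%N%:Z (l3 * p2)%N%:Z (p2 * p3)%N%:Z
  ltac:(rewrite /a2 d2; lia) ltac:(rewrite /a3 d3; lia) ltac:(rewrite /PZ; lia) ND1.
have N2' := ND a2 a1 a3 PZ p2%:Z (l1 * p3)%N%:Z (l3 * p1)%N%:Z (p1 * p3)%N%:Z
  ltac:(rewrite /a1 d1; lia) ltac:(rewrite /a3 d3; lia) ltac:(rewrite /PZ; lia) ND2.
have N3' := ND a3 a1 a2 PZ p3%:Z (l1 * p2)%N%:Z (l2 * p1)%N%:Z (p1 * p2)%N%:Z
  ltac:(rewrite /a1 d1; lia) ltac:(rewrite /a2 d2; lia) ltac:(rewrite /PZ; lia) ND3.
have N2 : forall s1 s2 s3 K, (s2 = 1 \/ s2 = -1) -> s1*a1 + s2*a2 + s3*a3 + K*PZ <> 0.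
  by move=> s1 s2 s3 K h; have := N2' s2 s1 s3 K h; lia.
have N3 : forall s1 s2 s3 K, (s3 = 1 \/ s3 = -1) -> s1*a1 + s2*a2 + s3*a3 + K*PZ <> 0.
  by move=> s1 s2 s3 K h; have := N3' s3 s1 s2 K h; lia.
clear N2' N3'.
pose G n := \sum_(e1 : bool) \sum_(e2 : bool) \sum_(e3 : bool)
     (if n%:Z == rep PZ a1 a2 a3 e1 e2 e3 then - (sgb e1 * sgb e2 * sgb e3) else 0).
have SE : \sum_(1 <= n < (2 * (p1 * p2 * p3)).+1) (n%:Z * chi p1 p2 p3 l1 l2 l3 n%:Z)
   = \sum_(1 <= n < (2 * (p1 * p2 * p3)).+1) (n%:Z * G n).
  apply: eq_big_nat => n Hn; congr (_ * _).
  by apply: chi_eq => //; rewrite -ltnS.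
have RB e1 e2 e3 : 1 <= rep PZ a1 a2 a3 e1 e2 e3 <= (2 * (p1 * p2 * p3))%N%:Z.
  by rewrite PoszM; exact: rep_bound.
rewrite SE; clear SE.
under eq_bigr => n _ do rewrite /G !big_bool /= !mulrDr.
rewrite !big_split !(sum_ind _ _ _ (RB _ _ _)).
have K1 := kfsvN PZ a1 a2 a3 hPZ N1 true true true.
have K2 := kfsvN PZ a1 a2 a3 hPZ N1 true false false.
have K3 := kfsvN PZ a1 a2 a3 hPZ N1 false true false.
have K4 := kfsvN PZ a1 a2 a3 hPZ N1 false false true.
rewrite /= in K1 K2 K3 K4.
rewrite /rep K1 K2 K3 K4.
set k0 := kf PZ (sv a1 a2 a3 true true true).
set k1 := kf PZ (sv a1 a2 a3 true false false).
set k2 := kf PZ (sv a1 a2 a3 false true false).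
set k3 := kf PZ (sv a1 a2 a3 false false true).
rewrite /=.
set E := (X in X != 0).
have HE : E = -(4 * PZ) * (k0 + k1 + k2 + k3) by rewrite /E /sv /sgb; ring.
rewrite -/E HE; clear HE E.
have F := FIN PZ a1 a2 a3 B1 B2 B3 N1; cbv zeta in F; fold k0 k1 k2 k3 in F.
have ea1 : a1 = (l1 * (p2 * p3))%N%:Z by rewrite /a1 d1.
have ea2 : a2 = (l2 * (p1 * p3))%N%:Z by rewrite /a2 d2.
have ea3 : a3 = (l3 * (p1 * p2))%N%:Z by rewrite /a3 d3.
have hx0 := xsum p1 p2 p3 l1 l2 l3 1 1 1 hp1 hp2 hp3.
have hx1 := xsum p1 p2 p3 l1 l2 l3 1 1 (-1) hp1 hp2 hp3.
have hx2 := xsum p1 p2 p3 l1 l2 l3 1 (-1) 1 hp1 hp2 hp3.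
have hx3 := xsum p1 p2 p3 l1 l2 l3 (-1) 1 1 hp1 hp2 hp3.
rewrite -ea1 -ea2 -ea3 -/PZ ?rmorphN ?rmorph1 !mul1r ?mulN1r in hx0 hx1 hx2 hx3.
rewrite hx0 hx1 hx2 hx3.
have L1 A : (1 < A%:~R / PZ%:~R :> rat) = (PZ < A) by rewrite (lt_div_l 1 1 A PZ) // mul1r.
have L2 A : (A%:~R / PZ%:~R < 3 :> rat) = (A < 3 * PZ) by rewrite (lt_div_r 3 3 A PZ).
have L3 A : (-1 < A%:~R / PZ%:~R :> rat) = (- PZ < A).
  by rewrite (lt_div_l (-1) (-1) A PZ) ?mulN1r // rmorphN rmorph1.
have L4 A : (A%:~R / PZ%:~R < 1 :> rat) = (A < PZ) by rewrite (lt_div_r 1 1 A PZ) ?mul1r.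
rewrite !L1 !L2 !L3 !L4.
have CE : forall b1 b2 b3 b4 b5 b6 b7 b8 : bool,
  [/\ b1 && b2, b3 && b4, b5 && b6 & b7 && b8] <->
  (b1 /\ b2 /\ b3 /\ b4 /\ b5 /\ b6 /\ b7 /\ b8).
  move=> b1 b2 b3 b4 b5 b6 b7 b8; split.
    by case=> /andP[? ?] /andP[? ?] /andP[? ?] /andP[? ?].
  by case=> [? [? [? [? [? [? [? ?]]]]]]]; split; apply/andP; split.
case: F => [[Hk HC]|[Hk HC]]; rewrite Hk.
- have HC' := (proj2 (CE _ _ _ _ _ _ _ _) HC).
  split; [split => // _; rewrite /PZ; lia | move=> _; rewrite /PZ; lia].
- split; [split => [H|/CE H] | move=> /CE H]; try (by case: HC); rewrite /PZ in H *; lia.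
Qed.
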